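(* Consider the planar optimal control problem of minimizing $J=-m(t_f)$ over the thrust parameters $T_1,T_2$, the free final time $t_f$ and the measurable unit thrust direction $\vec u(t)$, subject to $$\dot{\vec r}=\vec v,\qquad \dot{\vec v}=-\frac{\mu}{r^3}\vec r+\frac{T(t)}{m}\vec u,\qquad \dot m=-\frac{T(t)}{v_e},$$ with fixed initial state $(\vec r_0,\vec v_0,m_0)$ at $t_0$ and final constraints $w(t_f)=w_f$, $h(t_f)=h_f$, where the thrust follows the linear model $T(t)=T_1+(t-t_0)T_2$ and is assumed strictly positive on $[t_0,t_f]$. Let $(\vec p_r,\vec p_v,p_m,p_0)$ be costates and multiplier satisfying the Pontryagin conditions listed in the context, in particular the parameter stationarity conditions $$\int_{t_0}^{t_f}\frac{\partial T}{\partial T_1}\,\Phi\,dt=0,\qquad \int_{t_0}^{t_f}\frac{\partial T}{\partial T_2}\,\Phi\,dt=0,\qquad \Phi:=\frac{p_v}{m}-\frac{p_m}{v_e},\ p_v=\|\vec p_v\|.$$ Then, with $\Psi:=m\,p_m$, one has $\Psi(t_f)=\Psi(t_0)$, i.e. $$p_m(t_0)\,m(t_0)=-p_0\,m(t_f).$$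
   Context: Planar (two-dimensional) motion in an Earth-centered inertial frame; $\vec r,\vec v,m$ are position, velocity, mass; $r=\|\vec r\|$; $\mu>0$ is the gravitational constant; $v_e>0$ the exhaust velocity; $\vec u$ a unit vector. Energy per unit mass $w=\tfrac{v^2}{2}-\tfrac{\mu}{r}$, angular momentum $\vec h=\vec r\times\vec v$, $h=\|\vec h\|$. Hamiltonian $H=\vec p_r^{\,t}\vec v+\vec p_v^{\,t}\big(-\tfrac{\mu}{r^3}\vec r+\tfrac{T}{m}\vec u\big)-p_m\tfrac{T}{v_e}$. Pontryagin conditions: maximization gives $\vec u=\vec p_v/p_v$ so that $H=H_0+T\Phi$ with $H_0=\vec p_r^{\,t}\vec v+\vec p_v^{\,t}\vec g$; costate equations $\dot{\vec p}_r=-\tfrac{\partial \vec g}{\partial\vec r}\vec p_v$, $\dot{\vec p}_v=-\vec p_r$, $\dot p_m=\tfrac{T}{m^2}p_v$; transversality on mass $p_m(t_f)=-p_0$ with $p_0\le 0$ a normalization multiplier; $H\equiv 0$. *)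

(* Defs.v *)
From Stdlib Require Import Reals Lra.
Open Scope R_scope.

Definition vec := (R * R)%type.
Definition vx (a : vec) : R := fst a.
Definition vy (a : vec) : R := snd a.
Definition dot (a b : vec) : R := vx a * vx b + vy a * vy b.
Definition vnorm (a : vec) : R := sqrt (dot a a).
Definition vadd (a b : vec) : vec := (vx a + vx b, vy a + vy b).
Definition vscale (k : R) (a : vec) : vec := (k * vx a, k * vy a).
(* z-component of the planar cross product r x v *)
Definition cross (a b : vec) : R := vx a * vy b - vy a * vx b.

Definition grav (mu : R) (r : vec) : vec := vscale (- mu / vnorm r ^ 3) r.
(* (dg/dr) p  (dg/dr is symmetric): mu/r^3 ( -p + 3 (r.p)/r^2 r ) *)
Definition grav_jac_mul (mu : R) (r p : vec) : vec :=
  vadd (vscale (- mu / vnorm r ^ 3) p)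
       (vscale (3 * mu * dot r p / vnorm r ^ 5) r).

Definition energy (mu : R) (r v : vec) : R := vnorm v ^ 2 / 2 - mu / vnorm r.
Definition angmom (r v : vec) : R := Rabs (cross r v).

Definition thrust (T1 T2 t0 t : R) : R := T1 + (t - t0) * T2.

Definition Phi (ve : R) (m : R) (pv : vec) (pm : R) : R := vnorm pv / m - pm / ve.

Definition Hamil (mu ve T : R) (r v : vec) (m : R) (pr pv : vec) (pm : R) (u : vec) : R :=
  dot pr v + dot pv (vadd (grav mu r) (vscale (T / m) u)) - pm * T / ve.

(* Main.v *)
Require Import Defs.
From Stdlib Require Import Reals.
Open Scope R_scope.


From Coquelicot Require Import Coquelicot.
From Stdlib Require Import Lra.

Definition clamp (a b x : R) : R := Rmax a (Rmin b x).

Lemma clamp_lip a b x y : a <= b -> Rabs (clamp a b x - clamp a b y) <= Rabs (x - y).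
Proof.
  intros H. unfold clamp, Rmax, Rmin.
  repeat destruct Rle_dec; unfold Rabs; repeat destruct Rcase_abs; lra.
Qed.

Lemma clamp_id a b x : a <= x <= b -> clamp a b x = x.
Proof. intros H. unfold clamp, Rmax, Rmin. repeat destruct Rle_dec; lra. Qed.

Lemma clamp_in a b x : a <= b -> a <= clamp a b x <= b.
Proof. intros H. unfold clamp, Rmax, Rmin. repeat destruct Rle_dec; lra. Qed.

Lemma clamp_cont a b x : a <= b -> continuity_pt (clamp a b) x.
Proof.
  intros H eps Heps. exists eps. split; [lra|].
  intros y [_ Hy]. simpl in *. unfold R_dist in *.
  eapply Rle_lt_trans; [apply clamp_lip; lra| lra].
Qed.

Lemma vnorm_cont (p : R -> vec) t :
  continuity_pt (fun s => vx (p s)) t -> continuity_pt (fun s => vy (p s)) t ->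
  continuity_pt (fun s => vnorm (p s)) t.
Proof.
  intros H1 H2. unfold vnorm, dot.
  apply (continuity_pt_comp (fun s => vx (p s) * vx (p s) + vy (p s) * vy (p s)) sqrt).
  - apply continuity_pt_plus; apply continuity_pt_mult; auto.
  - apply continuity_pt_sqrt. nra.
Qed.

Theorem mainTheorem1
  (mu ve : R) (Hmu : 0 < mu) (Hve : 0 < ve)
  (t0 tf T1 T2 : R) (Ht : t0 < tf)
  (r0 v0 : vec) (m0 wf hf : R)
  (r v : R -> vec) (m : R -> R) (u : R -> vec)
  (pr pv : R -> vec) (pm : R -> R) (p0 : R)
  (* thrust strictly positive on [t0, tf] *)
  (HT : forall t, t0 <= t <= tf -> 0 < thrust T1 T2 t0 t)
  (* well-posedness: nonzero radius and positive mass *)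
  (Hr : forall t, t0 <= t <= tf -> 0 < vnorm (r t))
  (Hm : forall t, t0 <= t <= tf -> 0 < m t)
  (* unit thrust direction *)
  (Hu : forall t, t0 <= t <= tf -> vnorm (u t) = 1)
  (* continuity of states and costates on [t0, tf] *)
  (Hcont : forall t, t0 <= t <= tf ->
     continuity_pt (fun s => vx (r s)) t /\ continuity_pt (fun s => vy (r s)) t /\
     continuity_pt (fun s => vx (v s)) t /\ continuity_pt (fun s => vy (v s)) t /\
     continuity_pt m t /\
     continuity_pt (fun s => vx (pr s)) t /\ continuity_pt (fun s => vy (pr s)) t /\
     continuity_pt (fun s => vx (pv s)) t /\ continuity_pt (fun s => vy (pv s)) t /\
     continuity_pt pm t)
  (* state equations *)
  (Hdr : forall t, t0 < t < tf ->
     derivable_pt_lim (fun s => vx (r s)) t (vx (v t)) /\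
     derivable_pt_lim (fun s => vy (r s)) t (vy (v t)))
  (Hdv : forall t, t0 < t < tf ->
     derivable_pt_lim (fun s => vx (v s)) t
       (vx (vadd (grav mu (r t)) (vscale (thrust T1 T2 t0 t / m t) (u t)))) /\
     derivable_pt_lim (fun s => vy (v s)) t
       (vy (vadd (grav mu (r t)) (vscale (thrust T1 T2 t0 t / m t) (u t)))))
  (Hdm : forall t, t0 < t < tf -> derivable_pt_lim m t (- thrust T1 T2 t0 t / ve))
  (* initial and final conditions *)
  (Hinit : r t0 = r0 /\ v t0 = v0 /\ m t0 = m0)
  (Hfinal : energy mu (r tf) (v tf) = wf /\ angmom (r tf) (v tf) = hf)
  (* costate equations *)
  (Hdpr : forall t, t0 < t < tf ->
     derivable_pt_lim (fun s => vx (pr s)) t (- vx (grav_jac_mul mu (r t) (pv t))) /\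
     derivable_pt_lim (fun s => vy (pr s)) t (- vy (grav_jac_mul mu (r t) (pv t))))
  (Hdpv : forall t, t0 < t < tf ->
     derivable_pt_lim (fun s => vx (pv s)) t (- vx (pr t)) /\
     derivable_pt_lim (fun s => vy (pv s)) t (- vy (pr t)))
  (Hdpm : forall t, t0 < t < tf ->
     derivable_pt_lim pm t (thrust T1 T2 t0 t / (m t) ^ 2 * vnorm (pv t)))
  (* maximization of the Hamiltonian with respect to the unit direction *)
  (Hmax : forall t, t0 <= t <= tf ->
     forall w : vec, vnorm w = 1 -> dot (pv t) w <= dot (pv t) (u t))
  (* transversality on mass, normalization multiplier *)
  (Hp0 : p0 <= 0) (Hpmf : pm tf = - p0)
  (* H identically zero *)
  (HH : forall t, t0 <= t <= tf ->
     Hamil mu ve (thrust T1 T2 t0 t) (r t) (v t) (m t) (pr t) (pv t) (pm t) (u t) = 0)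
  (* stationarity with respect to T1 (dT/dT1 = 1) *)
  (HI1 : Riemann_integrable (fun t => 1 * Phi ve (m t) (pv t) (pm t)) t0 tf)
  (HI1z : RiemannInt HI1 = 0)
  (* stationarity with respect to T2 (dT/dT2 = t - t0) *)
  (HI2 : Riemann_integrable (fun t => (t - t0) * Phi ve (m t) (pv t) (pm t)) t0 tf)
  (HI2z : RiemannInt HI2 = 0) :
  pm t0 * m t0 = - p0 * m tf.
Proof.
  set (gg := fun t => thrust T1 T2 t0 t * Phi ve (m t) (pv t) (pm t)).
  set (gt := fun t => gg (clamp t0 tf t)).
  assert (Hgc : forall t, t0 <= t <= tf -> continuity_pt gg t).
  { intros t Htt. destruct (Hcont t Htt) as (_&_&_&_&Cm&_&_&Cpx&Cpy&Cpm).
    unfold gg, Phi, thrust.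
    apply (continuity_pt_mult (fun t => T1 + (t - t0) * T2)
             (fun t => vnorm (pv t) / m t - pm t / ve)).
    - reg.
    - apply (continuity_pt_minus (fun t => vnorm (pv t) / m t) (fun t => pm t / ve)).
      + apply (continuity_pt_div (fun t => vnorm (pv t)) m); auto.
        apply vnorm_cont; auto. specialize (Hm t Htt); lra.
      + apply (continuity_pt_div pm (fun _ => ve)); auto. apply continuity_pt_const.
        intros a b; auto. lra. }
  assert (Hgt : forall t, continuity_pt gt t).
  { intros t. unfold gt. apply (continuity_pt_comp (clamp t0 tf) gg).
    apply clamp_cont; lra. apply Hgc. apply clamp_in; lra. }
  assert (Hex : forall a b, ex_RInt gt a b).
  { intros a b. apply (@ex_RInt_continuous R_CompleteNormedModule). intros z _.
    apply continuity_pt_filterlim. apply Hgt. }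
  assert (Hder : forall x, is_derive (fun y => RInt gt t0 y) x (gt x)).
  { intros x. apply (@is_derive_RInt R_CompleteNormedModule gt (fun y => RInt gt t0 y) t0).
    - apply filter_forall. intros y. apply (@RInt_correct R_CompleteNormedModule). apply Hex.
    - apply continuity_pt_filterlim. apply Hgt. }
  set (G := fun x => minus (m x * pm x) (RInt gt t0 x)).
  set (df := fun x => minus ((- thrust T1 T2 t0 x / ve) * pm x
                 + m x * (thrust T1 T2 t0 x / (m x) ^ 2 * vnorm (pv x))) (gt x)).
  destruct (MVT_gen G t0 tf df) as (c & Hc & Heq).
  - rewrite Rmin_left, Rmax_right by lra. intros x Hx.
    unfold G, df. apply (@is_derive_minus R_AbsRing R_NormedModule (fun x => m x * pm x) (fun x => RInt gt t0 x)); [|apply Hder].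
    apply is_derive_Reals.
    apply (derivable_pt_lim_mult m pm x); [apply Hdm|apply Hdpm]; auto.
  - rewrite Rmin_left, Rmax_right in * by lra. intros x Hx. unfold G.
    apply (continuity_pt_minus (fun x => m x * pm x) (fun x => RInt gt t0 x)).
    + destruct (Hcont x Hx) as (_&_&_&_&Cm&_&_&Cpx&Cpy&Cpm).
      apply (continuity_pt_mult m pm); auto.
    + apply continuity_pt_filterlim. apply (@ex_derive_continuous R_AbsRing R_NormedModule (fun x => RInt gt t0 x)).
      eexists. apply Hder.
  - rewrite Rmin_left, Rmax_right in Hc by lra.
    assert (Hdf : df c = 0).
    { unfold df, gt, gg, Phi. rewrite clamp_id by lra.
      unfold minus, plus, opp; simpl.
      specialize (Hm c Hc). field. split; lra. }
    rewrite Hdf, Rmult_0_l in Heq. unfold G in Heq.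
    unfold minus, plus, opp in Heq; simpl in Heq.
    rewrite RInt_point in Heq. unfold zero in Heq; simpl in Heq.
    assert (HR : RInt gt t0 tf = 0).
    { assert (HI : is_RInt (fun t => T1 * (1 * Phi ve (m t) (pv t) (pm t)) + T2 * ((t - t0) * Phi ve (m t) (pv t) (pm t))) t0 tf (T1 * RiemannInt HI1 + T2 * RiemannInt HI2)).
      { apply (@is_RInt_plus R_NormedModule); apply (@is_RInt_scal R_NormedModule);
          apply ex_RInt_Reals_aux_1. }
      rewrite HI1z, HI2z in HI.
      rewrite (RInt_ext gt (fun t => T1 * (1 * Phi ve (m t) (pv t) (pm t)) + T2 * ((t - t0) * Phi ve (m t) (pv t) (pm t)))).
      - pose proof (is_RInt_unique _ _ _ _ HI) as HU. simpl in HU. rewrite Rmult_0_r, Rmult_0_r, Rplus_0_r in HU. exact HU.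
      - rewrite Rmin_left, Rmax_right by lra. intros x Hx.
        unfold gt, gg. rewrite clamp_id by lra. unfold thrust. change (?a = ?b) with (@eq R a b). ring. }
    rewrite HR, Hpmf in Heq. lra.
Qed.
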